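(* Let $K$ be an algebraically closed field, $K\subset K'$ a field extension and $x=(x_1,\ldots,x_n)$. Let $J_1,\ldots,J_p$ be subsets of $\{1,\ldots,n\}$, $x_{J_i}=(x_k)_{k\in J_i}$, and $A_i=K[x_{J_i}]_{(x_{J_i})}$, $A'_i=K'[x_{J_i}]_{(x_{J_i})}$ for $i\in\{1,\ldots,p\}$. Set $\mathcal{N}=A_1\times\cdots\times A_p$ and $\mathcal{N}'=A'_1\times\cdots\times A'_p$. Let $f$ be a finite system of polynomials in $K[x]_{(x)}[Y]$, $Y=(Y_1,\ldots,Y_p)$, and let $\hat y\in\mathcal{N}'$ satisfy $f(\hat y)=0$. Then there exists $y\in\mathcal{N}$ such that $f(y)=0$ and $\operatorname{ord} y_i=\operatorname{ord}\hat y_i$ for all $i\in\{1,\ldots,p\}$.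
   Context: $K[x_{J}]_{(x_J)}$ denotes the localization of the polynomial ring $K[x_J]$ at the maximal ideal generated by the variables $x_J$. For an element $g$ of such a local ring, $\operatorname{ord} g$ is its $(x)$-adic order, i.e. the largest $k$ with $g\in(x)^k$ (the least degree of a monomial with nonzero coefficient in its power series expansion), with $\operatorname{ord}0=\infty$. *)

(* Defs.v *)
From HB Require Import structures.
From mathcomp Require Import all_boot all_order all_algebra.
From mathcomp Require Import fraction.
From mathcomp Require Import mpoly.
Set Implicit Arguments. Unset Strict Implicit. Unset Printing Implicit Defensive.
Import GRing.Theory.
Local Open Scope ring_scope.

(* Variables x_1..x_n are indexed by 'I_n = {0,..,n-1}.
   All local rings K'[x_J]_(x_J) are realised inside the field of fractions
   FF K' n = K'(x_1,..,x_n) of the polynomial ring K'[x_1,..,x_n]. *)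
Notation FF K' n := {fraction {mpoly K'[n]}}.
Notation "x %:F" := (@FracField.tofrac _ x) : ring_scope.

Section Loc.
Context (n : nat).

Definition vars_in (R : nzRingType) (J : {set 'I_n}) (a : {mpoly R[n]}) : Prop :=
  forall m, m \in msupp a -> forall k, k \notin J -> m k = 0%N.

(* c belongs to K'[x_J]_(x_J): c = a/b with a, b in K'[x_J], b(0) <> 0 *)
Definition in_loc (K' : fieldType) (J : {set 'I_n}) (c : FF K' n) : Prop :=
  exists a b : {mpoly K'[n]},
    [/\ vars_in J a, vars_in J b, b@_0%MM != 0 & c = a%:F / b%:F].

(* c belongs to the image of K[x_J]_(x_J) in K'[x_J]_(x_J) under the
   embedding induced by iota : K -> K' *)
Definition in_loc_img (K K' : fieldType) (iota : {rmorphism K -> K'})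
    (J : {set 'I_n}) (c : FF K' n) : Prop :=
  exists a b : {mpoly K[n]},
    [/\ vars_in J a, vars_in J b, b@_0%MM != 0 &
        c = (map_mpoly iota a)%:F / (map_mpoly iota b)%:F].

(* c lies in (x)^k, the k-th power of the maximal ideal of K'[x]_(x) *)
Definition in_mpow (K' : fieldType) (c : FF K' n) (k : nat) : Prop :=
  exists a b : {mpoly K'[n]},
    [/\ b@_0%MM != 0, c = a%:F / b%:F &
        forall m, m \in msupp a -> (k <= mdeg m)%N].

(* ord c = ord d, where ord g = largest k with g in (x)^k (or infinity) *)
Definition same_ord (K' : fieldType) (c d : FF K' n) : Prop :=
  forall k, in_mpow c k <-> in_mpow d k.

End Loc.

(* Main.v *)
Require Import Defs.
From HB Require Import structures.
From mathcomp Require Import all_boot all_order all_algebra all_field.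
From mathcomp Require Import fraction.
From mathcomp Require Import mpoly.
From Stdlib Require Import Classical.
Set Implicit Arguments. Unset Strict Implicit. Unset Printing Implicit Defensive.
Import GRing.Theory.
Local Open Scope ring_scope.

Section Closed.
Variable K : closedFieldType.

Lemma nonroot_ex (q : {poly K}) : q != 0 -> exists z, q.[z] != 0.
Proof.
move=> q0.
have hs : (1 < size (q * 'X)%R)%N by rewrite size_mulX // ltnS lt0n size_poly_eq0.
have : size (q * 'X - 1) != 1%N.
  by rewrite size_addl ?size_opp ?size_polyC ?oner_eq0 //; case: (size _) hs => // -[].
move/closed_rootP => [z]; rewrite /root !hornerE subr_eq0 => /eqP h.
exists z; apply/eqP => h2; move: h; rewrite h2 mul0r => /eqP; by rewrite eq_sym oner_eq0.
Qed.

Lemma dvd_roots (p q : {poly K}) : p != 0 -> (forall z, root p z -> root q z) ->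
  p %| q ^+ (size p).
Proof.
move=> + + ; move: {2}(size p) (leqnn (size p)) => k; elim: k p => [|k IH] p.
  by rewrite leqn0 size_poly_eq0 => ->.
move=> hs p0 hr.
have [/eqP s1|s1] := eqVneq (size p) 1%N.
  have [c c0 ->] : exists2 c, c != 0 & p = c%:P.
    by apply/size_poly1P; rewrite s1.
  by rewrite -[c%:P]mulr1 mul_polyC dvdpZl // dvd1p.
have [z rz] := closed_rootP p s1.
have := rz; rewrite -dvdp_XsubCl => /divpK hp.
set p1 := p %/ ('X - z%:P) in hp.
have p10 : p1 != 0 by apply: contraNneq p0 => e; rewrite -hp e mul0r.
have sp : size p = (size p1).+1.
  by rewrite -hp size_Mmonic ?monicXsubC // size_XsubC addn2.
rewrite sp -{1}hp exprS mulrC; apply: dvdp_mul.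
  by rewrite dvdp_XsubCl; apply: hr.
apply: IH => //; first by rewrite -ltnS -sp.
move=> w rw; apply: hr; by rewrite -hp rootM rw.
Qed.

Fixpoint PR (r : nat) : idomainType :=
  match r with 0 => (K : idomainType) | r'.+1 => ({poly PR r'} : idomainType) end.

Fixpoint ev (L : fieldType) (iota : {rmorphism K -> L}) (ts : nat -> L) (r : nat)
  : {rmorphism PR r -> L} :=
  match r return {rmorphism PR r -> L} with
  | 0 => iota
  | r'.+1 => horner_morph (fun x => mulrC (ts r') (ev iota ts r' x))
  end.

Lemma evS (L : fieldType) (iota : {rmorphism K -> L}) ts r (u : PR r.+1) :
  ev iota ts r.+1 u = (map_poly (ev iota ts r) u).[ts r].
Proof. by []. Qed.

Lemma ev_ext (L : fieldType) (iota : {rmorphism K -> L}) ts1 ts2 r :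
  (forall i, (i < r)%N -> ts1 i = ts2 i) -> ev iota ts1 r =1 ev iota ts2 r.
Proof.
elim: r => [|r IH] h u //=.
rewrite !evS h // (eq_map_poly (IH _)) // => i lt; apply: h; exact: ltnW.
Qed.

Lemma map_ker (R : nzRingType) (L1 L2 : nzRingType) (E : {rmorphism R -> L1})
  (F : {rmorphism R -> L2}) (Q : {poly R}) :
  (forall u, E u = 0 -> F u = 0) -> map_poly E Q = 0 -> map_poly F Q = 0.
Proof.
move=> h hq; apply/polyP => i; rewrite coef_map coef0; apply: h.
by rewrite -coef_map hq coef0.
Qed.

Lemma ex_min_nat (P : nat -> Prop) : (exists n, P n) ->
  exists n, P n /\ forall m, P m -> (n <= m)%N.
Proof.
move=> [n Pn]; elim: n {-2}n (leqnn n) Pn => [|k IH] n.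
  rewrite leqn0 => /eqP -> P0; exists 0%N; split => //.
move=> hn Pn; case: (classic (exists m, P m /\ (m < n)%N)).
  move=> [m [Pm lt]]; apply: (IH m) => //; rewrite -ltnS; exact: leq_trans lt hn.
move=> hno; exists n; split => // m Pm; rewrite leqNgt; apply/negP => lt.
by apply: hno; exists m.
Qed.

Lemma poly_neq0_coef (R : nzRingType) (L : nzRingType) (E : {rmorphism R -> L}) (Q : {poly R}) :
  map_poly E Q != 0 -> exists j, E Q`_j != 0.
Proof.
move=> h; apply: NNPP => hn; move/eqP: h; apply; apply/polyP => j.
rewrite coef_map coef0; apply: NNPP => hj; apply: hn; exists j; exact/eqP.
Qed.


Lemma size_map_le (R L : nzRingType) (F : {rmorphism R -> L}) (p : {poly R}) :
  (size (map_poly F p) <= size p)%N.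
Proof. by apply/leq_sizeP => j hj; rewrite coef_map (nth_default _ hj) raddf0. Qed.

Definition idK : {rmorphism K -> K} := idfun.

Theorem NS (L : fieldType) (iota : {rmorphism K -> L}) (r : nat) :
  forall (ts : nat -> L) (s : PR r), ev iota ts r s != 0 ->
  exists zs : nat -> K, (forall u, ev iota ts r u = 0 -> ev idK zs r u = 0)
     /\ ev idK zs r s != 0.
Proof.
elim: r => [|r IH] ts s hs.
  exists (fun=> 0); split => /= [u hu|]; last first.
    by apply: contraNneq hs => /= ->; rewrite raddf0.
  by apply/eqP; rewrite -(fmorph_eq0 iota) hu.
set E := ev iota ts r; set t := ts r.
rewrite evS -/E -/t in hs.
have ext z zs : ev idK (fun i => if i == r then z else zs i) r =1 ev idK zs r.
  by apply: ev_ext => i lt; rewrite ltn_eqF.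
case: (classic (exists P : {poly PR r}, map_poly E P != 0 /\ (map_poly E P).[t] = 0)).
  move=> exP.
  have := ex_min_nat (P := fun k => exists P : {poly PR r},
     [/\ map_poly E P != 0, (map_poly E P).[t] = 0 & size (map_poly E P) = k]).
  case; first by case: exP => P [h1 h2]; exists (size (map_poly E P)), P.
  move=> m0 [[P [hP0 hPt hsz]] hmin].
  set P' := \poly_(i < m0) P`_i.
  have hPP : map_poly E P' = map_poly E P.
    apply/polyP => i; rewrite !coef_map coef_poly; case: ifP => // /negbT.
    by rewrite -leqNgt => le; rewrite raddf0 -coef_map nth_default // hsz.
  have m0pos : (0 < m0)%N by rewrite -hsz lt0n size_poly_eq0.
  set a := P`_(m0.-1).
  have ha : E a != 0.
    by rewrite -coef_map -hsz -lead_coefE lead_coef_eq0.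
  have a0 : a != 0 by apply: contraNneq ha => ->; rewrite raddf0.
  have szP' : size P' = m0 by rewrite size_poly_eq.
  have lcP' : lead_coef P' = a by rewrite lead_coef_poly.
  have P'0 : P' != 0 by rewrite -size_poly_eq0 szP' -lt0n.
  have hP't : (map_poly E P').[t] = 0 by rewrite hPP.
  have key (G : {rmorphism PR r -> L}) (u : {poly PR r}) :
      G a ^+ scalp u P' *: map_poly G u
        = map_poly G (u %/ P') * map_poly G P' + map_poly G (u %% P').
    by rewrite -lcP' -rmorphXn -map_polyZ Pdiv.Idomain.divp_eq rmorphD rmorphM.
  have keyK (G : {rmorphism PR r -> K}) (u : {poly PR r}) :
      G a ^+ scalp u P' *: map_poly G u
        = map_poly G (u %/ P') * map_poly G P' + map_poly G (u %% P').
    by rewrite -lcP' -rmorphXn -map_polyZ Pdiv.Idomain.divp_eq rmorphD rmorphM.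
  set R0 := s ^+ m0 %% P'.
  have hR : map_poly E R0 != 0.
    apply/eqP => e; have := key E (s ^+ m0).
    rewrite -/R0 e addr0 => /(congr1 (horner^~ t)).
    rewrite hornerZ hornerM hP't mulr0 rmorphXn horner_exp => /eqP.
    by rewrite mulf_eq0 !expf_eq0 (negbTE ha) (negbTE hs) !andbF.
  have [j hj] := poly_neq0_coef hR.
  have [zs [hk hz]] := IH ts (a * R0`_j) ltac:(by rewrite rmorphM mulf_neq0).
  set F := ev idK zs r.
  have /andP [Fa FR] : (F a != 0) && (F R0`_j != 0).
    by move: hz; rewrite rmorphM mulf_eq0 negb_or.
  set pK := map_poly F P'; set sK := map_poly F s.
  have szK : size pK = m0 by rewrite size_map_poly_id0 ?szP' ?lcP'.
  have pK0 : pK != 0 by rewrite -size_poly_eq0 szK -lt0n.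
  have [z [rz sz]] : exists z, root pK z /\ sK.[z] != 0.
    apply: NNPP => hno.
    have hd : pK %| sK ^+ m0.
      rewrite -szK; apply: dvd_roots => // w rw; apply: NNPP => nw; apply: hno.
      by exists w; split => //; apply/negP.
    have hRK : map_poly F R0 != 0.
      by apply/eqP => e; move: FR; rewrite -coef_map e coef0 eqxx.
    have : pK %| map_poly F R0.
      have -> : map_poly F R0 = F a ^+ scalp (s ^+ m0) P' *: sK ^+ m0
                                - map_poly F (s ^+ m0 %/ P') * pK.
        by rewrite -[sK ^+ m0]rmorphXn keyK addrC addKr.
      by rewrite dvdp_sub ?dvdp_mull // dvdpZr ?expf_neq0.
    move/(dvdp_leq hRK); rewrite szK leqNgt => /negP; apply.
    apply: (leq_ltn_trans (size_map_le _ _)).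
    by rewrite -szP' ltn_modp.
  exists (fun i => if i == r then z else zs i); split; last first.
    by rewrite evS (eq_map_poly (ext z zs)) eqxx.
  move=> u; rewrite !evS (eq_map_poly (ext z zs)) eqxx -/E -/t -/F => hu.
  set R2 := u %% P'.
  have hR2 : map_poly E R2 = 0.
    apply: NNPP => /eqP hn.
    have h2 : (map_poly E R2).[t] = 0.
      have := key E u; rewrite -/R2 => /(congr1 (horner^~ t)).
      by rewrite hornerZ hu mulr0 hornerD hornerM hP't mulr0 add0r.
    have := hmin _ (ex_intro _ R2 (And3 hn h2 erefl)).
    rewrite leqNgt => /negP; apply; apply: (leq_ltn_trans (size_map_le _ _)).
    by rewrite -szP' ltn_modp.
  have hF2 : map_poly F R2 = 0 by apply: map_ker hR2.
  have := keyK F u; rewrite -/R2 hF2 addr0 => /(congr1 (horner^~ z)).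
  rewrite hornerZ hornerM (rootP rz) mulr0 => /eqP.
  by rewrite mulf_eq0 expf_eq0 (negbTE Fa) andbF /= => /eqP.
move=> noP.
have trans Q : (map_poly E Q).[t] = 0 -> map_poly E Q = 0.
  move=> hQ; apply: NNPP => hn; apply: noP; exists Q; split => //; exact/eqP.
have sn0 : map_poly E s != 0 by apply: contraNneq hs => ->; rewrite horner0.
have [j hj] := poly_neq0_coef sn0.
have [zs [hk hz]] := IH ts s`_j hj.
set F := ev idK zs r.
have sK0 : map_poly F s != 0.
  by apply/eqP => e; move: hz; rewrite -/F -coef_map e coef0 eqxx.
have [z hzz] := nonroot_ex sK0.
exists (fun i => if i == r then z else zs i); split; last first.
  by rewrite evS (eq_map_poly (ext z zs)) eqxx.
move=> u; rewrite !evS (eq_map_poly (ext z zs)) eqxx -/E -/t -/F => hu.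
by rewrite (map_ker hk (trans _ hu)) horner0.
Qed.
End Closed.

Lemma ord_char (F0 : fieldType) n (a b : {mpoly F0[n]}) k : b@_0 != 0 ->
 (in_mpow (a%:F / b%:F) k <-> forall m, m \in msupp a -> (k <= mdeg m)%N).
Proof.
move=> b00; split; last by move=> h; exists a, b.
case=> a' [b' [b'0 e ha']].
have nz (c : {mpoly F0[n]}) : c@_0 != 0 -> c != 0.
  by move=> h; apply: contraNneq h => ->; rewrite mcoeff0.
have e2 : a * b' = a' * b.
  apply/eqP; rewrite -tofrac_eq !tofracM -eqr_div ?tofrac_eq0 ?nz //; exact/eqP.
move=> m hm; apply: NNPP => /negP; rewrite -ltnNge => lt.
have [d0 [[m0 [hm0 hd]] hmin]] := ex_min_nat (P := fun d => exists m, m \in msupp a /\ mdeg m = d)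
   (ex_intro _ (mdeg m) (ex_intro _ m (conj hm erefl))).
have lt0 : (mdeg m0 < k)%N.
  by rewrite hd; apply: leq_ltn_trans lt; apply: hmin; exists m.
have c1 : (a' * b)@_m0 = 0.
  rewrite mcoeffM big1 // => -[[k1 hb1] [k2 hb2]] /= /eqP em.
  have hd2 := congr1 (@mdeg n) em; rewrite mdegD in hd2.
  have -> : a'@_k1 = 0.
    apply: memN_msupp_eq0; apply/negP => /ha'; rewrite leqNgt; apply/negP/negPn.
    apply: leq_ltn_trans lt0; rewrite hd2; exact: leq_addr.
  by rewrite mul0r.
have c2 : (a * b')@_m0 = a@_m0 * b'@_0.
  rewrite mcoeffM (bigD1 (BMultinom (ltnSn (mdeg m0)), bm0)) /=; last first.
    by rewrite addm0.
  rewrite big1 ?addr0 // => -[[k1 hb1] [k2 hb2]] /= /andP [/eqP em hne].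
  have hd2 := congr1 (@mdeg n) em; rewrite mdegD in hd2.
  have k20 : k2 != 0%MM :> 'X_{1..n}.
    apply: contraNneq hne => e0; rewrite xpair_eqE !bmeqP /= e0 eqxx andbT.
    by rewrite em e0 addm0.
  have -> : a@_k1 = 0.
    apply: memN_msupp_eq0; apply/negP => hk1.
    have := hmin (mdeg k1) (ex_intro _ k1 (conj hk1 erefl)).
    rewrite -hd hd2 -{2}(addn0 (mdeg k1)) leq_add2l leqn0 mdeg_eq0.
    by rewrite (negbTE k20).
  by rewrite mul0r.
move: c1; rewrite -e2 c2 => /eqP; rewrite mulf_eq0 (negbTE b'0) orbF.
by rewrite mcoeff_eq0 hm0.
Qed.

Section Rel.
Variables (R : comNzRingType) (F0 : fieldType) (P1 P2 : {rmorphism R -> F0}).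

Definition rel (x x' : F0) := exists u v, [/\ P1 v != 0, P2 v != 0,
  x = P1 u / P1 v & x' = P2 u / P2 v].

Lemma rel_const u v : P1 v != 0 -> P2 v != 0 -> rel (P1 u / P1 v) (P2 u / P2 v).
Proof. by move=> h1 h2; exists u, v. Qed.

Lemma rel0 : rel 0 0.
Proof. by exists 0, 1; rewrite !rmorph1 !raddf0 !mul0r !oner_eq0. Qed.

Lemma rel1 : rel 1 1.
Proof. by exists 1, 1; rewrite !rmorph1 !divr1 !oner_eq0. Qed.

Lemma relD x y x' y' : rel x x' -> rel y y' -> rel (x + y) (x' + y').
Proof.
move=> [u1 [v1 [a1 b1 -> ->]]] [u2 [v2 [a2 b2 -> ->]]].
exists (u1 * v2 + u2 * v1), (v1 * v2).
by rewrite !rmorphD !rmorphM !mulf_neq0 // !addf_div.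
Qed.

Lemma relM x y x' y' : rel x x' -> rel y y' -> rel (x * y) (x' * y').
Proof.
move=> [u1 [v1 [a1 b1 -> ->]]] [u2 [v2 [a2 b2 -> ->]]].
exists (u1 * u2), (v1 * v2).
by rewrite !rmorphM !mulf_neq0 // !mulf_div.
Qed.

Lemma relX x x' k : rel x x' -> rel (x ^+ k) (x' ^+ k).
Proof.
move=> h; elim: k => [|k IH]; first by rewrite !expr0; exact: rel1.
by rewrite !exprS; apply: relM.
Qed.

Lemma rel_meval p (g : {mpoly F0[p]}) Y Y' :
  (forall m, rel g@_m g@_m) -> (forall i, rel (Y i) (Y' i)) -> rel g.@[Y] g.@[Y'].
Proof.
move=> hg hY; rewrite !mevalE.
apply: (big_ind2 rel rel0 (fun _ _ _ _ h1 h2 => relD h1 h2)) => m _; apply: relM => //.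
apply: (big_ind2 rel rel1 (fun _ _ _ _ h1 h2 => relM h1 h2)) => i _; exact: relX.
Qed.

Lemma rel_eq0 x x' : (forall u, P1 u = 0 -> P2 u = 0) -> rel x x' -> x = 0 -> x' = 0.
Proof.
move=> hk [u [v [a1 a2 -> ->]]] /eqP; rewrite mulf_eq0 invr_eq0 (negbTE a1) orbF.
by move/eqP/hk => ->; rewrite mul0r.
Qed.
End Rel.

Section Lift.
Variables (R S : nzRingType) (n : nat) (lift : S -> R).
Hypothesis lift0 : lift 0 = 0.

Definition mlift (q : {mpoly S[n]}) : {mpoly R[n]} :=
  \sum_(m <- msupp q) lift q@_m *: 'X_[m].

Lemma mlift_coef q m : (mlift q)@_m = lift q@_m.
Proof.
rewrite /mlift raddf_sum /=.
under eq_bigr do rewrite mcoeffZ mcoeffX.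
case: (boolP (m \in msupp q)) => hm.
  rewrite (bigD1_seq m) ?msupp_uniq //= eqxx mulr1 big1 ?addr0 // => m' hm'.
  by rewrite (negbTE hm') mulr0.
rewrite big1_seq ?(memN_msupp_eq0 hm) ?lift0 // => m' /andP [_ hm'].
by case: eqP hm' hm => [->->|]; rewrite ?mulr0.
Qed.
End Lift.

Section Extra.
Variable K : closedFieldType.

Fixpoint var (r j : nat) : PR K r :=
  match r return PR K r with
  | 0 => 0
  | r'.+1 => (if j == r' then 'X else (var r' j)%:P : {poly PR K r'})
  end.

Lemma ev_var (L : fieldType) (iota : {rmorphism K -> L}) ts r j :
  (j < r)%N -> ev iota ts r (var r j) = ts j.
Proof.
elim: r => // r IH lt; rewrite evS /=; case: eqP => [->|ne].
  by rewrite map_polyX hornerX.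
rewrite map_polyC hornerC; apply: IH; rewrite -ltnS ltn_neqAle lt andbT; apply/eqP. by case=> e; apply: ne.
Qed.

Fixpoint kap (r : nat) : {rmorphism K -> PR K r} :=
  match r return {rmorphism K -> PR K r} with
  | 0 => idK K
  | r'.+1 => ((@polyC (PR K r')) \o kap r' : {rmorphism K -> {poly PR K r'}})
  end.

Lemma ev_kap (L : fieldType) (iota : {rmorphism K -> L}) ts r c :
  ev iota ts r (kap r c) = iota c.
Proof.
by elim: r => // r IH; rewrite evS /= map_polyC hornerC; apply: IH.
Qed.

Lemma lift_ex (L : fieldType) (iota : {rmorphism K -> L}) (l : seq L) :
  exists r ts (lift : L -> PR K r), lift 0 = 0 /\
    forall x, x \in l -> ev iota ts r (lift x) = x.
Proof.
exists (size l), (fun j => nth 0 l j),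
  (fun x => if x == 0 then 0 else var (size l) (index x l)).
rewrite eqxx; split => // x hx; case: eqP => [->|_]; first by rewrite raddf0.
by rewrite ev_var ?index_mem // nth_index.
Qed.
End Extra.

Lemma map_mpoly_comp n (A B C : nzRingType) (f : {rmorphism B -> C})
   (g : {rmorphism A -> B}) (h : {rmorphism A -> C}) (q : {mpoly A[n]}) :
  (forall x, f (g x) = h x) -> map_mpoly f (map_mpoly g q) = map_mpoly h q.
Proof. by move=> e; apply/mpolyP => m; rewrite !mcoeff_map_mpoly; apply: e. Qed.

Unset Implicit Arguments.

Lemma nz_of_coef0 (R : nzRingType) n (q : {mpoly R[n]}) : q@_0 != 0 -> q != 0.
Proof. by apply: contraNneq => ->; rewrite mcoeff0. Qed.

Theorem corollary1p3
  (K : closedFieldType) (K' : fieldType) (iota : {rmorphism K -> K'})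
  (n p : nat) (J : 'I_p -> {set 'I_n})
  (f : seq {mpoly (FF K' n)[p]})
  (hf : forall g, g \in f -> forall m, in_loc_img iota [set: 'I_n] (g@_m))
  (yhat : 'I_p -> FF K' n)
  (hyhat : forall i, in_loc (J i) (yhat i))
  (hsol : forall g, g \in f -> g.@[yhat] = 0) :
  exists y : 'I_p -> FF K' n,
    [/\ forall i, in_loc_img iota (J i) (y i),
        forall g, g \in f -> g.@[y] = 0 &
        forall i, same_ord (y i) (yhat i)].
Proof.
have : forall i, exists ab : {mpoly K'[n]} * {mpoly K'[n]},
    [/\ vars_in (J i) ab.1, vars_in (J i) ab.2, ab.2@_0 != 0
      & yhat i = ab.1%:F / ab.2%:F].
  by move=> i; case: (hyhat i) => a [b h]; exists (a, b).
case/fin_all_exists => ab hab.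
pose a i := (ab i).1; pose b i := (ab i).2.
have : forall i, exists mi, a i = 0 \/ (mi \in msupp (a i) /\
    forall m, m \in msupp (a i) -> (mdeg mi <= mdeg m)%N).
  move=> i; case: (eqVneq (a i) 0) => [->|nz]; first by exists 0%MM; left.
  have [d0 [[m0 [hm0 hd]] hmin]] := ex_min_nat
    (P := fun d => exists m, m \in msupp (a i) /\ mdeg m = d)
    (ex_intro _ _ (ex_intro _ _ (conj (mlead_supp nz) erefl))).
  exists m0; right; split => // m hm; rewrite hd; apply: hmin; by exists m.
case/fin_all_exists => mi hmi.
pose l := flatten [seq [seq (a i)@_m | m <- msupp (a i)] ++
                        [seq (b i)@_m | m <- msupp (b i)] | i <- enum 'I_p].
have [r [ts [lift [lift0 hlift]]]] := lift_ex iota l.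
pose E := ev iota ts r.
have hca : forall i m, E (lift (a i)@_m) = (a i)@_m.
  move=> i m; case: (boolP (m \in msupp (a i))) => hm; last first.
    by rewrite (memN_msupp_eq0 hm) lift0 raddf0.
  apply: hlift; apply/flattenP; eexists; first by apply/mapP; exists i; rewrite ?mem_enum.
  by rewrite mem_cat; apply/orP; left; apply/mapP; exists m.
have hcb : forall i m, E (lift (b i)@_m) = (b i)@_m.
  move=> i m; case: (boolP (m \in msupp (b i))) => hm; last first.
    by rewrite (memN_msupp_eq0 hm) lift0 raddf0.
  apply: hlift; apply/flattenP; eexists; first by apply/mapP; exists i; rewrite ?mem_enum.
  by rewrite mem_cat; apply/orP; right; apply/mapP; exists m.
pose al i := mlift lift (a i); pose bl i := mlift lift (b i).
have hal : forall i, map_mpoly E (al i) = a i.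
  by move=> i; apply/mpolyP => m; rewrite mcoeff_map_mpoly mlift_coef //; first [exact: hca | exact: hcb].
have hbl : forall i, map_mpoly E (bl i) = b i.
  by move=> i; apply/mpolyP => m; rewrite mcoeff_map_mpoly mlift_coef //; first [exact: hca | exact: hcb].
pose w i := if a i == 0 then 1 else (al i)@_(mi i).
pose s := \prod_(i < p) ((bl i)@_0 * w i).
have hs : E s != 0.
  rewrite rmorph_prod; apply/prodf_neq0 => i _; rewrite rmorphM mulf_neq0 //.
    by rewrite /bl mlift_coef // hcb; case: (hab i).
  rewrite /w; case: ifP => [_|/negbT a0]; first by rewrite rmorph1 oner_eq0.
  rewrite mlift_coef // hca -mcoeff_msupp.
  by case: (hmi i) => [e|[]//]; rewrite e eqxx in a0.
have [zs [hk hz]] := NS hs.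
pose Fz := ev (idK K) zs r.
have hFz : forall i, Fz ((bl i)@_0) != 0 /\ Fz (w i) != 0.
  move=> i; move: hz; rewrite -/Fz rmorph_prod => /prodf_neq0 /(_ i isT).
  by rewrite rmorphM mulf_eq0 negb_or => /andP.
pose A i := map_mpoly Fz (al i); pose B i := map_mpoly Fz (bl i).
exists (fun i => (map_mpoly iota (A i))%:F / (map_mpoly iota (B i))%:F).
have iB0 : forall i, (map_mpoly iota (B i))@_0 != 0.
  by move=> i; rewrite !mcoeff_map_mpoly fmorph_eq0; case: (hFz i).
have suppA : forall i m, m \in msupp (map_mpoly iota (A i)) -> m \in msupp (a i).
  move=> i m; rewrite !mcoeff_msupp !mcoeff_map_mpoly fmorph_eq0 mlift_coef //.
  by apply: contraNneq => ->; rewrite lift0 !raddf0.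
split.
- move=> i; exists (A i), (B i); split.
  + move=> m hm k hkk; case: (hab i) => va _ _ _; apply: va hkk.
    apply: (suppA i); rewrite mcoeff_msupp mcoeff_map_mpoly fmorph_eq0 -mcoeff_msupp //.
  + move=> m hm k hkk; case: (hab i) => _ vb _ _; apply: vb hkk.
    move: hm; rewrite !mcoeff_msupp mcoeff_map_mpoly mlift_coef //.
    by apply: contraNneq => ->; rewrite lift0 !raddf0.
  + by rewrite mcoeff_map_mpoly; case: (hFz i).
  + by [].
- pose P1 := ((@FracField.tofrac _) \o map_mpoly E
     : {rmorphism {mpoly (PR K r)[n]} -> FF K' n}).
  pose P2 := ((@FracField.tofrac _) \o (map_mpoly iota \o map_mpoly Fz)
     : {rmorphism {mpoly (PR K r)[n]} -> FF K' n}).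
  have hker : forall u, P1 u = 0 -> P2 u = 0.
    move=> u /= /eqP; rewrite tofrac_eq0 => /eqP hu.
    have -> : map_mpoly Fz u = 0.
      apply/mpolyP => m; rewrite mcoeff_map_mpoly mcoeff0; apply: hk.
      by rewrite -mcoeff_map_mpoly hu mcoeff0.
    by rewrite !raddf0.
  have eK1 (c : {mpoly K[n]}) : P1 (map_mpoly (kap K r) c) = (map_mpoly iota c)%:F.
    rewrite /=; congr (_ %:F); apply/mpolyP => m; rewrite !mcoeff_map_mpoly. exact: ev_kap.
  have eK2 (c : {mpoly K[n]}) : P2 (map_mpoly (kap K r) c) = (map_mpoly iota c)%:F.
    by rewrite /=; congr (_ %:F); apply/mpolyP => m; rewrite !mcoeff_map_mpoly; congr (iota _); exact: ev_kap.
  move=> g hg; apply: (rel_eq0 hker _ (hsol g hg)); apply: rel_meval.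
    move=> m; have [c [d [_ _ d0 ->]]] := hf g hg m.
    have hnz : (map_mpoly iota d)%:F != 0.
      by rewrite tofrac_eq0; apply: nz_of_coef0; rewrite mcoeff_map_mpoly fmorph_eq0.
    have := rel_const (P1:=P1) (P2:=P2) (v:=map_mpoly (kap K r) d) (map_mpoly (kap K r) c).
    by rewrite !eK1 !eK2; apply.
  move=> i; case: (hab i) => _ _ b0 ->.
  have := rel_const (P1:=P1) (P2:=P2) (v:=bl i) (al i); rewrite /= hal hbl; apply.
    by rewrite tofrac_eq0 nz_of_coef0.
  by rewrite tofrac_eq0 nz_of_coef0 // mcoeff_map_mpoly fmorph_eq0 mcoeff_map_mpoly; case: (hFz i).
- move=> i k; case: (hab i) => _ _ b0 ->.
  rewrite (ord_char _ k (iB0 i)) (ord_char _ k b0); split.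
    move=> h m hm; case: (hmi i) => [a0|[hm1 hm2]].
      by move: hm; rewrite /a in a0; rewrite a0 msupp0.
    apply: leq_trans (hm2 m hm); apply: h.
    rewrite mcoeff_msupp !mcoeff_map_mpoly fmorph_eq0.
    have a0 : a i != 0 by apply/eqP => e; move: hm1; rewrite e msupp0.
    by case: (hFz i) => _; rewrite /w (negbTE a0).
  by move=> h m hm; apply: h; apply: suppA.
Qed.
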